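(* Let $\mathbb{G}$ be a $\sigma$-compact, second countable locally compact Abelian group, let $\mathsf{\Lambda}\subseteq\mathbb{G}$ be a Meyer set, and let $d$ be a metric compatible with the topology of the hull $X_{\mathsf{\Lambda}}$. For $\varepsilon>0$ let $P_\varepsilon=\{t\in\mathbb{G}: d(t.\mathsf{\Lambda},\mathsf{\Lambda})<\varepsilon\}$, and for compact $K\subseteq\mathbb{G}$ let $\mathsf{\Lambda}_K=\{t\in\mathbb{G}:(\mathsf{\Lambda}-t)\cap K=\mathsf{\Lambda}\cap K\}$. Then the following are equivalent: (1) each $\mathsf{\Lambda}_K$ is relatively dense in $\mathbb{G}$, and for every compact $K\subseteq\mathbb{G}$ there is a compact $K'\subseteq\mathbb{G}$ with $\mathsf{\Lambda}_{K'}-\mathsf{\Lambda}_{K'}\subseteq\mathsf{\Lambda}_K$; (2) each $P_\varepsilon$ is relatively dense in $\mathbb{G}$, and for each $\varepsilon>0$ there is $\delta>0$ with $P_\delta-P_\delta\subseteq P_\varepsilon$.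
   Context: A Meyer set of $\mathbb{G}$ is a subset $\Lambda\subseteq\mathbb{G}$ that is uniformly discrete and relatively dense and for which there is a finite set $F\subseteq\mathbb{G}$ with $\Lambda-\Lambda\subseteq\Lambda+F$. The hull is $X_{\mathsf{\Lambda}}=\{\Lambda\subseteq\mathbb{G}: \forall K\subseteq\mathbb{G}\text{ compact}\ \exists t\in\mathbb{G},\ \Lambda\cap K=(\mathsf{\Lambda}-t)\cap K\}$, equipped with the uniformity whose basis consists of the sets $\mathcal{U}_{K,U}=\{(\Lambda,\Lambda')\in X_{\mathsf{\Lambda}}^2:\exists t,t'\in U,\ (\Lambda-t)\cap K=(\Lambda'-t')\cap K\}$ for $K\subseteq\mathbb{G}$ compact and $U$ a neighborhood of $0$; this makes $X_{\mathsf{\Lambda}}$ a compact metrizable space, with $\mathbb{G}$-action $t.\Lambda=\Lambda-t$. *)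

(* Defs.v *)
From HB Require Import structures.
From mathcomp Require Import all_boot all_order all_algebra.
From mathcomp Require Import all_classical all_reals all_analysis.
Set Implicit Arguments. Unset Strict Implicit. Unset Printing Implicit Defensive.
Import Order.TTheory GRing.Theory Num.Theory.
Local Open Scope classical_set_scope.
Local Open Scope ring_scope.

Section Defs.
Variable G : topologicalZmodType.

Definition sigma_compact : Prop :=
  exists K : nat -> set G, (forall n, compact (K n)) /\ \bigcup_n K n = [set: G].

Definition LCA_sc : Prop :=
  [/\ hausdorff_space G, locally_compact [set: G], @second_countable G
    & sigma_compact].

(* the action t.A = A - t *)
Definition tr (t : G) (A : set G) : set G := [set a - t | a in A].

Definition setdiffG (A B : set G) : set G :=
  [set z | exists a b, [/\ A a, B b & z = a - b]].

Definition uniformly_discrete (L : set G) : Prop :=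
  exists U : set G, nbhs (0 : G) U /\
    forall x y, L x -> L y -> U (x - y) -> x = y.

Definition relatively_dense (S : set G) : Prop :=
  exists K : set G, compact K /\
    forall g : G, exists s k, [/\ S s, K k & g = s + k].

Definition Meyer (L : set G) : Prop :=
  [/\ uniformly_discrete L, relatively_dense L &
    exists F : set G, finite_set F /\
      forall x y, L x -> L y -> exists l f, [/\ L l, F f & x - y = l + f]].

Definition hull (L0 : set G) : set (set G) :=
  [set L | forall K : set G, compact K -> exists t : G, L `&` K = tr t L0 `&` K].

(* basic entourage U_{K,U} of the hull uniformity *)
Definition hull_ent (L0 : set G) (K U : set G) : set (set G * set G) :=
  [set p | [/\ hull L0 p.1, hull L0 p.2 &
    exists t t', [/\ U t, U t' & tr t p.1 `&` K = tr t' p.2 `&` K]]].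

(* d is a metric on the hull inducing its (uniform) topology *)
Definition compatible_metric (R : realType) (L0 : set G)
    (d : set G -> set G -> R) : Prop :=
  [/\ (forall A B, hull L0 A -> hull L0 B -> 0 <= d A B),
      (forall A B, hull L0 A -> hull L0 B -> (d A B = 0 <-> A = B)),
      (forall A B, hull L0 A -> hull L0 B -> d A B = d B A),
      (forall A B C, hull L0 A -> hull L0 B -> hull L0 C ->
          d A C <= d A B + d B C) &
   (
      (forall A, hull L0 A -> forall eps : R, 0 < eps ->
          exists K U, [/\ compact K, nbhs (0 : G) U &
            forall B, hull_ent L0 K U (A, B) -> d A B < eps]) /\
      (forall A, hull L0 A -> forall K U, compact K -> nbhs (0 : G) U ->
          exists2 eps : R, 0 < eps &
            forall B, hull L0 B -> d A B < eps -> hull_ent L0 K U (A, B)))].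

Definition Peps (R : realType) (L0 : set G) (d : set G -> set G -> R)
    (eps : R) : set G :=
  [set t | d (tr t L0) L0 < eps].

Definition LamK (L0 K : set G) : set G :=
  [set t | tr t L0 `&` K = L0 `&` K].

End Defs.

(* Main.v *)
Require Import Defs.
From HB Require Import structures.
From mathcomp Require Import all_boot all_order all_algebra.
From mathcomp Require Import all_classical all_reals all_analysis.
Import Order.TTheory GRing.Theory Num.Theory.
Local Open Scope classical_set_scope.
Local Open Scope ring_scope.
Set Implicit Arguments. Unset Strict Implicit.
Section S.
Variable G : topologicalZmodType.
Variable R : realType.
Implicit Types (A K U V : set G).

Lemma subV (U : set G) : nbhs (0:G) U -> exists V : set G, nbhs (0:G) V /\ forall x y, V x -> V y -> U (x - y).
Proof.
move=> U0.
have := @sub_continuous G (0,0) U; rewrite /= subr0 => /(_ U0).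
move=> [[A B] /= [A0 B0] AB].
exists (A `&` B); split; first exact: filterI.
by move=> x y [Ax _] [_ By]; exact: (AB (x,y)).
Qed.

Lemma compact_sub A B : compact A -> compact B ->
  compact ((fun p : G * G => p.1 - p.2) @` (A `*` B)).
Proof.
move=> cA cB; apply: continuous_compact; last exact: compact_setX.
apply: continuous_subspaceT; exact: sub_continuous.
Qed.

Lemma compact_add A B : compact A -> compact B ->
  compact ((fun p : G * G => p.1 + p.2) @` (A `*` B)).
Proof.
move=> cA cB; apply: continuous_compact; last exact: compact_setX.
apply: continuous_subspaceT; exact: add_continuous.
Qed.

Lemma tr0 A : tr 0 A = A.
Proof.
apply/seteqP; split => x /=.
  by move=> [a Aa <-]; rewrite subr0.
by move=> Ax; exists x => //; rewrite subr0.
Qed.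

Lemma trtr A s t : tr s (tr t A) = tr (t + s) A.
Proof.
apply/seteqP; split => x /=.
  by move=> [_ [a Aa <-] <-]; exists a => //; rewrite opprD addrA.
move=> [a Aa <-]; exists (a - t); first by exists a.
by rewrite opprD addrA.
Qed.

Lemma hull_tr (L0 : set G) t : hull L0 (tr t L0).
Proof. by move=> K _; exists t. Qed.

Lemma hull_self (L0 : set G) : hull L0 L0.
Proof. by rewrite -{2}(tr0 L0); exact: hull_tr. Qed.

Lemma LemB (L0 : set G) K U t r s : nbhs (0:G) U -> LamK L0 K r -> U s -> t + s = r ->
  hull_ent L0 K U (L0, tr t L0).
Proof.
move=> U0 Lr Us tsr; split => /=; [exact: hull_self|exact: hull_tr|].
exists 0, s; split => //; first exact: nbhs_singleton.
by rewrite tr0 trtr tsr Lr.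
Qed.

Lemma LemD (L0 : set G) (d : set G -> set G -> R) (eps : R) : compatible_metric L0 d -> 0 < eps ->
  exists K U, [/\ compact K, nbhs (0:G) U &
    forall t r s, LamK L0 K r -> U s -> t + s = r -> Peps L0 d eps t].
Proof.
move=> [_ _ hsym _ [c1 _]] e0.
have [K [U [cK U0 H]]] := c1 L0 (hull_self L0) eps e0.
exists K, U; split => // t r s Lr Us tsr.
rewrite /Peps /= hsym; [|exact: hull_tr|exact: hull_self].
apply: H; exact: (@LemB L0 K U t r s U0 Lr Us tsr).
Qed.

Lemma LemC (L0 : set G) (d : set G -> set G -> R) K (C0 : set G) V : compatible_metric L0 d ->
  compact K -> compact C0 -> nbhs (0:G) C0 -> nbhs (0:G) V ->
  exists2 eps : R, 0 < eps & forall t, Peps L0 d eps t ->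
    exists r s s', [/\ LamK L0 K r, V s /\ C0 s, V s' /\ C0 s' & t = r + s - s'].
Proof.
move=> [_ _ hsym _ [_ c2]] cK cC0 C00 V0.
pose K1 := (fun p : G * G => p.1 - p.2) @` (K `*` C0).
have [eps e0 H] := c2 L0 (hull_self L0) K1 (V `&` C0) (@compact_sub K C0 cK cC0) (filterI V0 C00).
exists eps => // t Pt.
have : d L0 (tr t L0) < eps.
  by rewrite hsym; [exact: Pt|exact: hull_self|exact: hull_tr].
move=> /(H _ (hull_tr L0 t)) [_ _ [s [s' [[Vs Cs] [Vs' Cs'] E]]]] /=.
exists (t + s' - s), s, s'; split => //; last first.
  by rewrite subrK addrK.
rewrite /LamK /=; apply/seteqP; split => x [xin Kx]; split => //.
- move: xin => [l Ll lx].
  have : (tr s' (tr t L0) `&` K1) (x - s).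
    split; last by exists (x, s).
    rewrite trtr; exists l => //; rewrite -lx.
    by rewrite opprB addrA addrAC addrK.
  rewrite -E => -[[l' Ll' e] _].
  by move: e => /(congr1 (fun z => z + s)); rewrite !subrK => <-.
- have : (tr s L0 `&` K1) (x - s) by split; [exists x|exists (x, s)].
  rewrite E trtr => -[[l Ll e] _]; exists l => //.
  move: e => /(congr1 (fun z => z + s)); rewrite subrK => <-.
  by rewrite opprB addrA addrAC.
Qed.

Lemma Disc (L0 : set G) : hausdorff_space G -> uniformly_discrete L0 ->
  forall c, nbhs (0:G) [set w | L0 (w - c) -> w = 0].
Proof.
move=> hG [U [U0 Hud]] c.
have [V [V0 HV]] := subV U0.
have [[p [Vp Lp pn0]]|np] := pselect (exists p, [/\ V p, L0 (p - c) & p != 0]).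
  have := @hausdorff_accessible G hG 0 p; rewrite eq_sym => /(_ pn0).
  move=> [A [oA A0 Ap]].
  have nA : nbhs (0:G) A by apply: open_nbhs_nbhs; split => //; rewrite -in_setE.
  apply: filterS (filterI V0 nA) => w [Vw Aw] Lw.
  have : w - c = p - c.
    apply: Hud => //; rewrite opprB addrA subrK; exact: HV.
  move=> /(congr1 (fun z => z + c)); rewrite !subrK => wp.
  by move: Ap; rewrite in_setE -wp => /(_ Aw).
apply: filterS V0 => w Vw Lw; case: (eqVneq w 0) => // wn0.
by exfalso; apply: np; exists w; split.
Qed.

Lemma DiscF (L0 : set G) (C : set G) : hausdorff_space G -> uniformly_discrete L0 ->
  finite_set C -> nbhs (0:G) [set w | forall c, C c -> L0 (w - c) -> w = 0].
Proof.
move=> hG ud /finite_fsetP [X ->].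
have := @filter_bigI G G X (fun c => [set w | L0 (w - c) -> w = 0]) (nbhs (0:G)) (nbhs_filter (0:G))
  (fun c _ => Disc hG ud c).
by apply: filterS => w H c Xc; apply: H.
Qed.

Lemma I1 (a b X Y : G) : (a + X) - (b + Y) + (Y - X) = a - b.
Proof. by rewrite -(opprB X Y) (opprD b Y) (addrACA a X) addrK. Qed.

Lemma LamK_mono (L0 A B : set G) t : LamK L0 (A `|` B) t -> LamK L0 A t.
Proof.
rewrite /LamK /= => E; apply/seteqP; split => x [Hx Ax].
  have : (tr t L0 `&` (A `|` B)) x by split => //; left.
  by rewrite E => -[].
have : (L0 `&` (A `|` B)) x by split => //; left.
by rewrite -E => -[].
Qed.

Lemma LamK_pt (L0 A : set G) t x0 : L0 x0 -> LamK L0 (A `|` [set x0]) t -> L0 (x0 + t).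
Proof.
rewrite /LamK /= => Lx E.
have : (L0 `&` (A `|` [set x0])) x0 by split => //; right.
rewrite -E => -[[l Ll e] _].
by rewrite -e subrK.
Qed.

Lemma locc : locally_compact [set: G] ->
  exists C0 : set G, compact C0 /\ nbhs (0:G) C0.
Proof.
move=> /(_ 0 I) [C0 + [cC0 _]]; rewrite withinET => C00.
by exists C0.
Qed.
End S.
Unset Implicit Arguments. Set Strict Implicit.

Theorem proposition4p2 (G : topologicalZmodType) (R : realType)
    (L0 : set G) (d : set G -> set G -> R) :
  LCA_sc G -> Meyer L0 -> compatible_metric L0 d ->
  ( (forall K : set G, compact K -> relatively_dense (LamK L0 K)) /\
    (forall K : set G, compact K -> exists K' : set G,
        compact K' /\ setdiffG (LamK L0 K') (LamK L0 K') `<=` LamK L0 K) )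
  <->
  ( (forall eps : R, 0 < eps -> relatively_dense (Peps L0 d eps)) /\
    (forall eps : R, 0 < eps -> exists2 delta : R, 0 < delta &
        setdiffG (Peps L0 d delta) (Peps L0 d delta) `<=` Peps L0 d eps) ).
Proof.
move=> [hG lcG _ _] [ud rdL [F [finF HF]]] cm.
have [C0 [cC0 C00]] := locc lcG.
have [x0 Lx0] : exists x0, L0 x0.
  by have [Kr [_ Hr]] := rdL; have [s [k [Ls _ _]]] := Hr 0; exists s.
split.
- move=> [rd1 dif1]; split.
  + move=> eps e0.
    have [K [U [cK U0 H]]] := LemD cm e0.
    have [C [cC HC]] := rd1 K cK.
    exists C; split => // g.
    have [s [k [Ls Ck gsk]]] := HC g.
    exists s, k; split => //.
    apply: (H s s 0) => //; [exact: nbhs_singleton|exact: addr0].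
  + move=> eps e0.
    have [K [U [cK U0 H]]] := LemD cm e0.
    have [V1 [V10 HV1]] := subV U0.
    have [V2 [V20 HV2]] := subV V10.
    have [K' [cK' HK']] := dif1 K cK.
    have [delta d0 HC] := LemC cm cK' cC0 C00 V20.
    exists delta => // z [a [b [Pa Pb ->]]].
    have [ra [sa [sa' [Lra [Vsa _] [Vsa' _] ->]]]] := HC a Pa.
    have [rb [sb [sb' [Lrb [Vsb _] [Vsb' _] ->]]]] := HC b Pb.
    apply: (H _ (ra - rb) ((sb - sb') - (sa - sa'))).
    * by apply: HK'; exists ra, rb.
    * by apply: HV1; apply: HV2.
    * by rewrite -(addrA ra sa) -(addrA rb sb) I1.
- move=> [rd2 dif2]; split.
  + move=> K cK.
    have [eps e0 HC] := LemC cm cK cC0 C00 C00.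
    have [C [cC HCC]] := rd2 eps e0.
    pose K1 := (fun p : G * G => p.1 - p.2) @` (C0 `*` C0).
    exists ((fun p : G * G => p.1 + p.2) @` (K1 `*` C)); split.
      by apply: compact_add => //; apply: compact_sub.
    move=> g; have [p [c [Pp Cc ->]]] := HCC g.
    have [r [s [s' [Lr [_ Cs] [_ Cs'] ->]]]] := HC p Pp.
    exists r, (s - s' + c); split => //; last by rewrite !addrA.
    exists (s - s', c) => //; split => //; by exists (s, s').
  + move=> K cK.
    have cKx : compact (K `|` [set x0]) by apply: compactU => //; exact: compact_set1.
    pose Cs := [set f + f2 + x0 | f in F & f2 in F].
    have finC : finite_set Cs by apply: finite_image2.
    have [V [V0 HV]] := subV (DiscF hG ud finC).
    have [eps e0 HC] := LemC cm cKx cC0 C00 V0.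
    have [delta d0 Hd] := dif2 eps e0.
    have [K2 [U2 [cK2 U20 H2]]] := LemD cm d0.
    exists (K2 `|` [set x0]); split.
      by apply: compactU => //; exact: compact_set1.
    move=> z [a [b [La Lb ->]]].
    have Pa : Peps L0 d delta a.
      apply: (H2 a a 0); [exact: LamK_mono La|exact: nbhs_singleton|exact: addr0].
    have Pb : Peps L0 d delta b.
      apply: (H2 b b 0); [exact: LamK_mono Lb|exact: nbhs_singleton|exact: addr0].
    have [r [s [s' [Lr [Vs _] [Vs' _] E]]]] := HC (a - b) (Hd (a - b) (ex_intro _ a (ex_intro _ b (And3 Pa Pb erefl)))).
    have La0 := LamK_pt Lx0 La.
    have Lb0 := LamK_pt Lx0 Lb.
    have Lr0 := LamK_pt Lx0 Lr.
    have [l4 [f [L4 Ff e1]]] := HF _ _ La0 Lb0.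
    have [l5 [f2 [L5 Ff2 e2]]] := HF _ _ L4 Lr0.
    have w0 : s - s' = 0.
      apply: (HV s s' Vs Vs' (f + f2 + x0)); first by exists f => //; exists f2.
      have -> : s - s' - (f + f2 + x0) = l5; last exact: L5.
      have -> : l5 = l4 - (x0 + r) - f2 by rewrite e2 addrK.
      have -> : l4 = a - b - f.
        by apply: (addIr f); rewrite subrK -e1 opprD addrA [LHS](ACl ((1*3)*2*4)) /= subrr add0r.
      rewrite E !opprD !addrA [RHS](ACl ((1*6)*2*3*4*7*5)) /= subrr add0r.
      done.
    apply: (LamK_mono (B := [set x0])).
    by rewrite E -addrA w0 addr0.
Qed.
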